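(* Let $T$ be a complete theory with monster model $\mathcal{U}$, $A\subseteq\mathcal{U}$ small, $\mu\in\mathfrak{M}_x(\mathcal{U})$, $\nu\in\mathfrak{M}_y(\mathcal{U})$. If $\mu$ is smooth over $A$ and $\mu\geq_{\mathbb{E},A}\nu$, then $\nu$ is smooth over $A$.
   Context: For $C\subseteq\mathcal{U}$, $\mathcal{L}_x(C)$ is the Boolean algebra of formulas in $x$ with parameters from $C$ modulo $T$, embedded in $\mathcal{L}_{xy}(C)$ via $\varphi(x)\mapsto\varphi(x)\wedge y=y$; $\mathfrak{M}_x(C)$ is the set of finitely additive probability measures on $\mathcal{L}_x(C)$. For $\omega\in\mathfrak{M}_{xy}(C)$, $\pi_x(\omega)(\varphi(x))=\omega(\varphi(x)\wedge y=y)$ (similarly $\pi_y$); $\omega|_D$ is restriction. $\mu\geq_{\mathbb{E},A}\nu$ means there is $\lambda\in\mathfrak{M}_{xy}(A)$ with $\pi_x(\lambda)=\mu|_A$ such that every $\omega\in\mathfrak{M}_{xy}(\mathcal{U})$ with $\omega|_A=\lambda$ and $\pi_x(\omega)=\mu$ satisfies $\pi_y(\omega)=\nu$. A global measure $\mu$ is smooth over $A$ if every global measure (in the same variables) agreeing with $\mu$ on $\mathcal{L}_x(A)$ equals $\mu$. *)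

(* Defs.v *)
From mathcomp Require Import all_boot.
From Stdlib Require Import Reals.

Set Implicit Arguments.
Unset Strict Implicit.
Unset Printing Implicit Defensive.

Record Language := {
  Fn : Type; Rl : Type;
  fn_ar : Fn -> nat; rl_ar : Rl -> nat }.

Record Structure (L : Language) := {
  carrier :> Type;
  fI : forall f : Fn L, ('I_(fn_ar f) -> carrier) -> carrier;
  rI : forall r : Rl L, ('I_(rl_ar r) -> carrier) -> Prop }.

Section Syntax.
Variables (L : Language) (M : Structure L).

Inductive term : Type :=
| Var : nat -> term
| Par : M -> term
| App : forall f : Fn L, ('I_(fn_ar f) -> term) -> term.

Inductive formula : Type :=
| Fals : formula
| Eqf : term -> term -> formula
| Relf : forall r : Rl L, ('I_(rl_ar r) -> term) -> formula
| Neg : formula -> formula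
| And : formula -> formula -> formula
| Ex : nat -> formula -> formula.

Fixpoint teval (v : nat -> M) (t : term) : M :=
  match t with
  | Var i => v i
  | Par m => m
  | App f a => fI (fun k => teval v (a k))
  end.

Definition upd (v : nat -> M) (i : nat) (a : M) : nat -> M :=
  fun j => if j == i then a else v j.

Fixpoint sat (v : nat -> M) (p : formula) : Prop :=
  match p with
  | Fals => False
  | Eqf t1 t2 => teval v t1 = teval v t2
  | Relf r a => rI (fun k => teval v (a k))
  | Neg q => ~ sat v q
  | And q1 q2 => sat v q1 /\ sat v q2
  | Ex i q => exists a : M, sat (upd v i a) q
  end.

Fixpoint tfv (t : term) (i : nat) : Prop :=
  match t with
  | Var j => j = i
  | Par _ => False
  | App f a => exists k, tfv (a k) i
  end.

Fixpoint ffv (p : formula) (i : nat) : Prop :=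
  match p with
  | Fals => False
  | Eqf t1 t2 => tfv t1 i \/ tfv t2 i
  | Relf r a => exists k, tfv (a k) i
  | Neg q => ffv q i
  | And q1 q2 => ffv q1 i \/ ffv q2 i
  | Ex j q => j <> i /\ ffv q i
  end.

Fixpoint tpar (t : term) (c : M) : Prop :=
  match t with
  | Var _ => False
  | Par m => m = c
  | App f a => exists k, tpar (a k) c
  end.

Fixpoint fpar (p : formula) (c : M) : Prop :=
  match p with
  | Fals => False
  | Eqf t1 t2 => tpar t1 c \/ tpar t2 c
  | Relf r a => exists k, tpar (a k) c
  | Neg q => fpar q c
  | And q1 q2 => fpar q1 c \/ fpar q2 c
  | Ex _ q => fpar q c
  end.

(** * Monster model: kappa-saturated and strongly kappa-homogeneous,
    kappa represented by a type K. *)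
Definition small (K : Type) (A : M -> Prop) : Prop :=
  ~ exists g : K -> M, injective g /\ forall k, A (g k).

Definition saturated (K : Type) : Prop :=
  forall (B : M -> Prop), small K B ->
  forall p : formula -> Prop,
    (forall q, p q -> (forall i, ffv q i -> i = 0%N) /\ (forall c, fpar q c -> B c)) ->
    (forall l : seq formula, (forall q, List.In q l -> p q) ->
       exists v, forall q, List.In q l -> sat v q) ->
    exists v, forall q, p q -> sat v q.

Definition automorphism (s : M -> M) : Prop :=
  (exists g : M -> M, cancel s g /\ cancel g s) /\
  (forall f (a : 'I_(fn_ar f) -> M), s (fI a) = fI (fun k => s (a k))) /\
  (forall r (a : 'I_(rl_ar r) -> M), rI a <-> rI (fun k => s (a k))).

Definition strongly_homogeneous (K : Type) : Prop :=
  forall (B : M -> Prop), small K B ->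
  forall h : M -> M,
    (forall q, (forall c, ~ fpar q c) ->
       forall v : nat -> M, (forall i, B (v i)) ->
       (sat v q <-> sat (fun i => h (v i)) q)) ->
    exists s, automorphism s /\ forall b, B b -> s b = h b.

Definition monster (K : Type) : Prop :=
  (exists e : nat -> K, injective e) /\
  (~ exists g : K -> (Fn L + Rl L)%type, injective g) /\
  saturated K /\ strongly_homogeneous K.

(** L_x(C) (formulas in the variables x with parameters from C, modulo T = Th(M))
    is represented by the C-definable sets of assignments nat -> M defined by a
    formula whose free variables lie in x.  The embedding L_x(C) -> L_xy(C),
    phi(x) |-> phi(x) /\ y = y, is then literally the inclusion. *)
Definition Lform (C : M -> Prop) (x : seq nat) (S : (nat -> M) -> Prop) : Prop :=
  exists q : formula, (forall i, ffv q i -> i \in x) /\ (forall c, fpar q c -> C c) /\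
    S = (fun v => sat v q).

Definition setTM : M -> Prop := fun _ => True.

Definition is_kmeasure (D : ((nat -> M) -> Prop) -> Prop)
  (m : ((nat -> M) -> Prop) -> R) : Prop :=
  (forall S, D S -> (0 <= m S)%R) /\
  m (fun _ => True) = 1%R /\
  (forall S1 S2, D S1 -> D S2 -> (forall v, S1 v -> S2 v -> False) ->
     m (fun v => S1 v \/ S2 v) = (m S1 + m S2)%R).

Definition agree (D : ((nat -> M) -> Prop) -> Prop) (m1 m2 : ((nat -> M) -> Prop) -> R) :=
  forall S, D S -> m1 S = m2 S.

Definition smooth (A : M -> Prop) (x : seq nat) (mu : ((nat -> M) -> Prop) -> R) : Prop :=
  forall mu', is_kmeasure (Lform setTM x) mu' ->
    agree (Lform A x) mu' mu -> agree (Lform setTM x) mu' mu.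

(** mu >=_{E,A} nu.  pi_x(omega) = mu means omega agrees with mu on L_x(U)
    (embedded in L_xy(U)); omega|_A = lambda means agreement on L_xy(A). *)
Definition E_ge (A : M -> Prop) (x y : seq nat)
  (mu nu : ((nat -> M) -> Prop) -> R) : Prop :=
  exists lam, is_kmeasure (Lform A (x ++ y)) lam /\
    agree (Lform A x) lam mu /\
    forall omega, is_kmeasure (Lform setTM (x ++ y)) omega ->
      agree (Lform A (x ++ y)) omega lam ->
      agree (Lform setTM x) omega mu ->
      agree (Lform setTM y) omega nu.

End Syntax.

(* Main.v *)
Require Import Defs.
From mathcomp Require Import all_boot.
From Stdlib Require Import Reals.
From mathcomp Require classical_sets.
From Stdlib Require Import Lra Classical ClassicalEpsilon FunctionalExtensionality PropExtensionality.
Set Implicit Arguments.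
Unset Strict Implicit.
Local Open Scope R_scope.
Section Gen.
Variables (L : Language) (M : Structure L).
Local Notation X := (nat -> carrier M).
Local Notation SS := ((nat -> carrier M) -> Prop).
Implicit Types (B D : SS -> Prop) (S a b e f c E : SS) (m : SS -> R) (v : X).

Lemma setext (S S' : SS) : (forall v, S v <-> S' v) -> S = S'.
Proof. intro H; apply functional_extensionality; intro v; apply propositional_extensionality; auto. Qed.

Definition BA (B : SS -> Prop) := B (fun _ : nat -> carrier M => True) /\ (forall S, B S -> B (fun v => ~ S v)) /\
  (forall S1 S2, B S1 -> B S2 -> B (fun v => S1 v /\ S2 v)).

Lemma BA_ext B S S' : B S -> (forall v, S v <-> S' v) -> B S'.
Proof. intros H E; rewrite <- (setext E); exact H. Qed.

Lemma BA_T B : BA B -> B (fun _ => True). Proof. intros [h _]; exact h. Qed.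
Lemma BA_N B S : BA B -> B S -> B (fun v => ~ S v). Proof. intros [_ [h _]]; auto. Qed.
Lemma BA_I B S1 S2 : BA B -> B S1 -> B S2 -> B (fun v => S1 v /\ S2 v). Proof. intros [_ [_ h]]; auto. Qed.
Lemma BA_F B : BA B -> B (fun _ => False).
Proof. intro h. apply (BA_ext (BA_N h (BA_T h))). tauto. Qed.
Lemma BA_U B S1 S2 : BA B -> B S1 -> B S2 -> B (fun v => S1 v \/ S2 v).
Proof. intros h h1 h2. apply (BA_ext (BA_N h (BA_I h (BA_N h h1) (BA_N h h2)))).
intro v; destruct (classic (S1 v)); tauto. Qed.

Section KM.
Variables (B : SS -> Prop) (m : SS -> R).
Hypotheses (hB : BA B) (hm : is_kmeasure B m).

Lemma km_ge0 S : B S -> 0 <= m S. Proof. destruct hm as [h _]; auto. Qed.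
Lemma km_T : m (fun _ => True) = 1. Proof. destruct hm as [_ [h _]]; auto. Qed.
Lemma km_add S1 S2 : B S1 -> B S2 -> (forall v, S1 v -> S2 v -> False) ->
  m (fun v => S1 v \/ S2 v) = m S1 + m S2.
Proof. destruct hm as [_ [_ h]]; auto. Qed.
Lemma km_add' S1 S2 S : B S1 -> B S2 -> (forall v, S1 v -> S2 v -> False) ->
  (forall v, S v <-> S1 v \/ S2 v) -> m S = m S1 + m S2.
Proof. intros h1 h2 d e. rewrite (setext e). apply km_add; auto. Qed.
Lemma km_F : m (fun _ => False) = 0.
Proof. assert (h : m (fun _ => True) = m (fun _ => True) + m (fun _ => False)).
apply km_add'. apply BA_T; auto. apply BA_F; auto. tauto. tauto.
rewrite km_T in h; lra. Qed.
Lemma km_N S : B S -> m S + m (fun v => ~ S v) = 1.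
Proof. intro h. rewrite <- km_T. symmetry; apply km_add'.
exact h. apply BA_N; auto. intros v h1 h2; auto.
intro v; destruct (classic (S v)); tauto. Qed.
Lemma km_mono S1 S2 : B S1 -> B S2 -> (forall v, S1 v -> S2 v) -> m S1 <= m S2.
Proof. intros h1 h2 i.
rewrite (@km_add' S1 (fun v => S2 v /\ ~ S1 v) S2); auto.
assert (0 <= m (fun v => S2 v /\ ~ S1 v)) by (apply km_ge0; apply BA_I; auto; apply BA_N; auto). lra.
apply BA_I; auto; apply BA_N; auto. tauto.
intro v; destruct (classic (S1 v)); firstorder. Qed.
Lemma km_le1 S : B S -> m S <= 1.
Proof. intro h; rewrite <- km_T; apply km_mono; auto. apply BA_T; auto. Qed.
End KM.

Definition lubR (P : R -> Prop) : R :=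
  match excluded_middle_informative (bound P /\ exists x, P x) with
  | left h => proj1_sig (completeness P (proj1 h) (proj2 h))
  | right _ => 0 end.
Lemma lubR_spec P : bound P -> (exists x, P x) -> is_lub P (lubR P).
Proof. intros h1 h2; unfold lubR. destruct (excluded_middle_informative _) as [h|h].
destruct (completeness P (proj1 h) (proj2 h)); simpl; auto. tauto. Qed.

Definition inner (B : SS -> Prop) (m : SS -> R) (E : SS) : R :=
  lubR (fun r => exists a, B a /\ (forall v, a v -> E v) /\ r = m a).
Definition outer B m (E : SS) : R := 1 - inner B m (fun v => ~ E v).

Section Inner.
Variables (B : SS -> Prop) (m : SS -> R).
Hypotheses (hB : BA B) (hm : is_kmeasure B m).

Lemma inner_is_lub E : is_lub (fun r => exists a, B a /\ (forall v, a v -> E v) /\ r = m a) (inner B m E).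
Proof. apply lubR_spec. exists 1. intros r [a [h1 [_ ->]]]. apply (km_le1 hB hm h1).
exists (m (fun _ => False)). exists (fun _ => False). split. apply BA_F; auto. split; tauto. Qed.

Lemma I1 E a : B a -> (forall v, a v -> E v) -> m a <= inner B m E.
Proof. intros h i. destruct (inner_is_lub E) as [h1 _]. apply h1. eauto. Qed.
Lemma I2 E r : (forall a, B a -> (forall v, a v -> E v) -> m a <= r) -> inner B m E <= r.
Proof. intros h. destruct (inner_is_lub E) as [_ h2]. apply h2. intros z [a [h3 [h4 ->]]]. auto. Qed.
Lemma O1 E f : B f -> (forall v, E v -> f v) -> outer B m E <= m f.
Proof. intros h i. unfold outer. assert (m (fun v => ~ f v) <= inner B m (fun v => ~ E v)).
apply I1. apply BA_N; auto. firstorder. assert (Hn := km_N hB hm h). lra. Qed.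
Lemma O2 E r : (forall f, B f -> (forall v, E v -> f v) -> r <= m f) -> r <= outer B m E.
Proof. intros h. unfold outer. assert (inner B m (fun v => ~ E v) <= 1 - r); [|lra].
apply I2. intros a ha i. assert (r <= m (fun v => ~ a v)). apply h. apply BA_N; auto.
intros v e ne. exact (i v ne e). assert (Hn := km_N hB hm ha). lra. Qed.
Lemma inner_ext E E' : (forall v, E v <-> E' v) -> inner B m E = inner B m E'.
Proof. intro e; rewrite (setext e); auto. Qed.
Lemma outer_ext E E' : (forall v, E v <-> E' v) -> outer B m E = outer B m E'.
Proof. intro e; rewrite (setext e); auto. Qed.
Lemma inner_ge0 E : 0 <= inner B m E.
Proof. rewrite <- (km_F hB hm). apply I1. apply BA_F; auto. tauto. Qed.
Lemma outer_ge0 E : 0 <= outer B m E.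
Proof. apply O2. intros; apply (km_ge0 hm); auto. Qed.

Lemma IA E1 E2 a : B a -> (forall v, E1 v -> a v) -> (forall v, E2 v -> a v -> False) ->
  inner B m (fun v => E1 v \/ E2 v) = inner B m E1 + inner B m E2.
Proof. intros ha i1 i2. apply Rle_antisym.
- apply I2. intros e he ie.
  rewrite (@km_add' B m hm (fun v => e v /\ a v) (fun v => e v /\ ~ a v) e).
  assert (m (fun v => e v /\ a v) <= inner B m E1).
  { apply I1. apply BA_I; auto. intros v [h1 h2]. destruct (ie v h1); auto. exfalso; eauto. }
  assert (m (fun v => e v /\ ~ a v) <= inner B m E2).
  { apply I1. apply BA_I; auto. apply BA_N; auto. intros v [h1 h2]. destruct (ie v h1); auto. exfalso; eauto. }
  lra. apply BA_I; auto. apply BA_I; auto. apply BA_N; auto. tauto.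
  intro v; destruct (classic (a v)); tauto.
- assert (forall e1 e2, B e1 -> B e2 -> (forall v, e1 v -> E1 v) -> (forall v, e2 v -> E2 v) ->
     m e1 + m e2 <= inner B m (fun v => E1 v \/ E2 v)).
  { intros e1 e2 h1 h2 j1 j2. rewrite <- (@km_add B m hm e1 e2); auto.
    apply I1. apply BA_U; auto. firstorder. intros v k1 k2. eauto. }
  assert (forall e2, B e2 -> (forall v, e2 v -> E2 v) -> inner B m E1 <= inner B m (fun v => E1 v \/ E2 v) - m e2).
  { intros e2 h2 j2. apply I2. intros e1 h1 j1. assert (H' := H e1 e2 h1 h2 j1 j2). lra. }
  assert (inner B m E2 <= inner B m (fun v => E1 v \/ E2 v) - inner B m E1).
  { apply I2. intros e2 h2 j2. assert (H' := H0 e2 h2 j2). lra. }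
  lra.
Qed.

Lemma OA E1 E2 a : B a -> (forall v, E1 v -> a v) -> (forall v, E2 v -> a v -> False) ->
  outer B m (fun v => E1 v \/ E2 v) = outer B m E1 + outer B m E2.
Proof. intros ha i1 i2. apply Rle_antisym.
- assert (forall f1 f2, B f1 -> B f2 -> (forall v, E1 v -> f1 v) -> (forall v, E2 v -> f2 v) ->
     outer B m (fun v => E1 v \/ E2 v) <= m f1 + m f2).
  { intros f1 f2 h1 h2 j1 j2.
    assert (B (fun v => f1 v /\ a v)) by (apply BA_I; auto).
    assert (B (fun v => f2 v /\ ~ a v)) by (apply BA_I; auto; apply BA_N; auto).
    apply Rle_trans with (m (fun v => (f1 v /\ a v) \/ (f2 v /\ ~ a v))).
    apply O1. apply BA_U; auto. intros v [e|e]. left; auto. right; split; eauto.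
    rewrite (km_add hm); auto. 2: tauto.
    assert (m (fun v => f1 v /\ a v) <= m f1) by (apply (km_mono hB hm); tauto).
    assert (m (fun v => f2 v /\ ~ a v) <= m f2) by (apply (km_mono hB hm); tauto). lra. }
  assert (forall f2, B f2 -> (forall v, E2 v -> f2 v) -> outer B m (fun v => E1 v \/ E2 v) - m f2 <= outer B m E1).
  { intros f2 h2 j2. apply O2. intros f1 h1 j1. assert (H' := H f1 f2 h1 h2 j1 j2). lra. }
  assert (outer B m (fun v => E1 v \/ E2 v) - outer B m E1 <= outer B m E2).
  { apply O2. intros f2 h2 j2. assert (H' := H0 f2 h2 j2). lra. }
  lra.
- apply O2. intros f hf j.
  rewrite (@km_add' B m hm (fun v => f v /\ a v) (fun v => f v /\ ~ a v) f).
  assert (outer B m E1 <= m (fun v => f v /\ a v)) by (apply O1; [apply BA_I; auto| firstorder]).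
  assert (outer B m E2 <= m (fun v => f v /\ ~ a v)).
  { apply O1. apply BA_I; auto; apply BA_N; auto. intros v e; split; eauto. }
  lra. apply BA_I; auto. apply BA_I; auto. apply BA_N; auto. tauto.
  intro v; destruct (classic (a v)); tauto.
Qed.

Lemma KK S b : B b -> inner B m (fun v => b v /\ S v) + outer B m (fun v => b v /\ ~ S v) = m b.
Proof. intro hb. apply Rle_antisym.
- assert (inner B m (fun v => b v /\ S v) <= m b - outer B m (fun v => b v /\ ~ S v)); [|lra].
  apply I2. intros e he ie.
  assert (outer B m (fun v => b v /\ ~ S v) <= m (fun v => b v /\ ~ e v)).
  { apply O1. apply BA_I; auto; apply BA_N; auto. intros v [h1 h2]; split; auto. intro; apply h2; apply ie; auto. }
  rewrite (@km_add' B m hm e (fun v => b v /\ ~ e v) b); auto. lra.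
  apply BA_I; auto; apply BA_N; auto. tauto. intro v; destruct (classic (e v)); firstorder.
- assert (m b - inner B m (fun v => b v /\ S v) <= outer B m (fun v => b v /\ ~ S v)); [|lra].
  apply O2. intros f hf jf.
  assert (m (fun v => b v /\ ~ f v) <= inner B m (fun v => b v /\ S v)).
  { apply I1. apply BA_I; auto; apply BA_N; auto. intros v [h1 h2]; split; auto.
    destruct (classic (S v)); auto. exfalso; auto. }
  assert (m b = m (fun v => b v /\ f v) + m (fun v => b v /\ ~ f v)).
  { apply (km_add' hm). apply BA_I; auto. apply BA_I; auto; apply BA_N; auto. tauto.
    intro v; destruct (classic (f v)); tauto. }
  assert (m (fun v => b v /\ f v) <= m f) by (apply (km_mono hB hm); auto; [apply BA_I; auto| tauto]).
  lra.
Qed.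
End Inner.

Definition extB B S : SS -> Prop := fun c => exists a b, B a /\ B b /\
  forall v, c v <-> (a v /\ S v) \/ (b v /\ ~ S v).
Definition extm B m S : SS -> R := fun c =>
  inner B m (fun v => c v /\ S v) + outer B m (fun v => c v /\ ~ S v).

Lemma onestep B m S : BA B -> is_kmeasure B m ->
  BA (extB B S) /\ (forall a, B a -> extB B S a) /\ extB B S S /\
  is_kmeasure (extB B S) (extm B m S) /\ agree B (extm B m S) m /\ extm B m S S = inner B m S.
Proof. intros hB hm.
assert (agr : agree B (extm B m S) m).
{ intros a ha. unfold extm. apply KK; auto. }
assert (inB : forall a, B a -> extB B S a).
{ intros a ha. exists a, a. split; auto. split; auto. intro v; destruct (classic (S v)); tauto. }
split; [|split; [exact inB|split; [|split; [|split; [exact agr|]]]]].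
- split; [|split].
  + apply inB. apply BA_T; auto.
  + intros c [a [b [ha [hb e]]]]. exists (fun v => ~ a v), (fun v => ~ b v).
    split. apply BA_N; auto. split. apply BA_N; auto.
    intro v; specialize (e v); destruct (classic (S v)); destruct (classic (a v)); destruct (classic (b v)); tauto.
  + intros c1 c2 [a1 [b1 [ha1 [hb1 e1]]]] [a2 [b2 [ha2 [hb2 e2]]]].
    exists (fun v => a1 v /\ a2 v), (fun v => b1 v /\ b2 v).
    split. apply BA_I; auto. split. apply BA_I; auto.
    intro v; specialize (e1 v); specialize (e2 v); destruct (classic (S v)); tauto.
- exists (fun _ => True), (fun _ => False). split. apply BA_T; auto. split. apply BA_F; auto. tauto.
- split; [|split].
  + intros c _. unfold extm. assert (h1 := inner_ge0 hB hm (fun v => c v /\ S v)).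
    assert (h2 := outer_ge0 hB hm (fun v => c v /\ ~ S v)). lra.
  + rewrite agr. apply km_T with B; auto. apply BA_T; auto.
  + intros c1 c2 [a1 [b1 [ha1 [hb1 e1]]]] [a2 [b2 [ha2 [hb2 e2]]]] d.
    unfold extm.
    assert (X1 : inner B m (fun v => (c1 v \/ c2 v) /\ S v) = inner B m (fun v => (c1 v /\ S v) \/ (c2 v /\ S v))) by (apply inner_ext; intro v; tauto).
    assert (X2 : outer B m (fun v => (c1 v \/ c2 v) /\ ~ S v) = outer B m (fun v => (c1 v /\ ~ S v) \/ (c2 v /\ ~ S v))) by (apply outer_ext; intro v; tauto).
    rewrite X1 X2.
    rewrite (@IA B m hB hm _ _ a1); auto.
    rewrite (@OA B m hB hm _ _ b1); auto. lra.
    intros v [h1 h2]. apply (e1 v) in h1. tauto.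
    intros v [h1 h2] h3. apply (d v); auto. apply (e1 v). tauto.
    intros v [h1 h2]. apply (e1 v) in h1. tauto.
    intros v [h1 h2] h3. apply (d v); auto. apply (e1 v). tauto.
- unfold extm. assert (X1 : inner B m (fun v => S v /\ S v) = inner B m S) by (apply inner_ext; intro v; tauto). rewrite X1.
  assert (outer B m (fun v => S v /\ ~ S v) <= 0).
  { rewrite <- (km_F hB hm). apply O1; auto. apply BA_F; auto. tauto. }
  assert (h2 := outer_ge0 hB hm (fun v => S v /\ ~ S v)). lra.
Qed.

Lemma extB_sub D B S : BA D -> (forall a, B a -> D a) -> D S -> forall c, extB B S c -> D c.
Proof. intros hD hBD hS c [a [b [ha [hb e]]]]. apply (BA_ext (S := fun v => (a v /\ S v) \/ (b v /\ ~ S v))).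
apply BA_U; auto; apply BA_I; auto; apply BA_N; auto. intro v; rewrite e; tauto. Qed.

Definition pb (P : Prop) : bool := if excluded_middle_informative P then true else false.
Lemma pbE P : pb P = true <-> P.
Proof. unfold pb; destruct (excluded_middle_informative P); split; auto; discriminate. Qed.

Lemma predext (P Q : SS -> Prop) : (forall a, P a <-> Q a) -> P = Q.
Proof. intro H; apply functional_extensionality; intro v; apply propositional_extensionality; auto. Qed.

Section Zext.
Variables (D B1 : SS -> Prop) (m1 : SS -> R).
Hypotheses (hD : BA D) (hB1 : BA B1) (h1D : forall a, B1 a -> D a) (hm1 : is_kmeasure B1 m1).

Definition good (p : (SS -> Prop) * (SS -> R)) := BA p.1 /\ (forall a, B1 a -> p.1 a) /\
  (forall a, p.1 a -> D a) /\ is_kmeasure p.1 p.2 /\ agree B1 p.2 m1.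
Definition TT := {p | good p}.
Definition leP (s t : TT) : Prop := (forall a, (proj1_sig s).1 a -> (proj1_sig t).1 a) /\
  agree (proj1_sig s).1 (proj1_sig t).2 (proj1_sig s).2.
Definition le (s t : TT) : bool := pb (leP s t).

Lemma good0 : good (B1, m1).
Proof. split; [auto|split; [auto|split; [auto|split; [auto|]]]]. intros a _; reflexivity. Qed.

Section Chain.
Variable (A : TT -> Prop).
Hypothesis (tot : forall s t, A s -> A t -> leP s t \/ leP t s).
Variable (s0 : TT). Hypothesis (As0 : A s0).
Definition Bu : SS -> Prop := fun a => exists s, A s /\ (proj1_sig s).1 a.
Definition mu : SS -> R := fun a =>
  match excluded_middle_informative (exists s, A s /\ (proj1_sig s).1 a) with
  | left h => (proj1_sig (proj1_sig (constructive_indefinite_description _ h))).2 a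
  | right _ => 0 end.
Lemma mu_eq s a : A s -> (proj1_sig s).1 a -> mu a = (proj1_sig s).2 a.
Proof. intros hs ha. unfold mu. destruct (excluded_middle_informative _) as [h|h].
2: exfalso; eauto.
destruct (constructive_indefinite_description _ h) as [s' [hs' ha']]. simpl.
destruct (tot hs hs') as [[_ ag]|[_ ag]]; unfold agree in ag; [exact (ag a ha) | exact (esym (ag a ha'))]. Qed.
Lemma dir s1 s2 : A s1 -> A s2 -> exists s, A s /\ (forall a, (proj1_sig s1).1 a -> (proj1_sig s).1 a)
  /\ (forall a, (proj1_sig s2).1 a -> (proj1_sig s).1 a).
Proof. intros h1 h2. destruct (tot h1 h2) as [[i _]|[i _]].
exists s2; auto. exists s1; auto. Qed.
Lemma good_u : good (Bu, mu).
Proof. assert (g0' := proj2_sig s0). destruct g0' as [bB [sB [sD [km ag]]]].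
split; [|split; [|split; [|split]]]; simpl.
- split; [|split].
  + exists s0. split; auto. apply BA_T; auto.
  + intros S [s [hs hS]]. exists s; split; auto. apply BA_N; auto. apply (proj2_sig s).
  + intros S1 S2 [s1 [hs1 hS1]] [s2 [hs2 hS2]]. destruct (dir hs1 hs2) as [s [hs [i1 i2]]].
    exists s; split; auto. apply BA_I; auto. apply (proj2_sig s).
- intros a ha. exists s0. split; auto. auto.
- intros a [s [hs ha]]. apply (proj1 (proj2 (proj2 (proj2_sig s)))); auto.
- split; [|split].
  + intros S [s [hs hS]]. rewrite (mu_eq hs hS). apply (proj1 (proj1 (proj2 (proj2 (proj2 (proj2_sig s)))))); auto.
  + assert (hT : (proj1_sig s0).1 (fun _ => True)) by (apply BA_T; auto).
    rewrite (@mu_eq s0); auto. apply km_T with (proj1_sig s0).1; auto.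
  + intros S1 S2 [s1 [hs1 hS1]] [s2 [hs2 hS2]] d. destruct (dir hs1 hs2) as [s [hs [i1 i2]]].
    destruct (proj2_sig s) as [bs [_ [_ [ks _]]]].
    rewrite (@mu_eq s); auto. rewrite (@mu_eq s S1); auto. rewrite (@mu_eq s S2); auto.
    apply km_add with (proj1_sig s).1; auto. apply BA_U; auto.
- intros a ha. rewrite (@mu_eq s0); auto.
Qed.
End Chain.

Lemma Zext : exists m, is_kmeasure D m /\ agree B1 m m1.
Proof.
assert (t0 : TT) by exact (exist _ _ good0).
destruct (@classical_sets.ZL_preorder TT t0 le) as [t mx].
- intro t; apply pbE. split; auto. intros a _; reflexivity.
- intros r s t h1 h2. destruct (proj1 (pbE _) h1) as [i1 a1]. destruct (proj1 (pbE _) h2) as [i2 a2]. apply pbE.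
  split; auto. intros a ha. unfold agree in *. rewrite a2; auto.
- intros A tot. destruct (classic (exists s, A s)) as [[s0 hs0]|ne].
  + assert (tot' : forall s t, A s -> A t -> leP s t \/ leP t s).
    { intros s t hs ht. destruct (tot s t hs ht) as [h|h]; [left|right]; exact (proj1 (pbE _) h). }
    exists (exist _ _ (good_u tot' hs0)). intros s hs. apply pbE. split; simpl.
    intros a ha; exists s; auto. intros a ha. apply mu_eq; auto.
  + exists t0. intros s hs; exfalso; eauto.
- destruct t as [[Bt mt] gt]. assert (gt' := gt). destruct gt' as [bt [st [tD [kt at']]]].
  simpl in *.
  assert (DB : forall a, D a -> Bt a).
  { intros S hS. apply NNPP; intro nS.
    destruct (@onestep Bt mt S bt kt) as [be [ie [Se [ke [ae _]]]]].
    assert (g : good (extB Bt S, extm Bt mt S)).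
    { split; [auto|split; [|split; [|split; [auto|]]]]; simpl.
      intros a ha; auto. apply extB_sub; auto.
      intros a ha. unfold agree in *. rewrite ae; auto. }
    assert (h : le (exist _ _ gt) (exist _ _ g)). apply pbE. split; simpl; auto.
    apply mx in h. destruct (proj1 (pbE _) h) as [i _]. simpl in i. auto. }
  exists mt. split; auto. replace D with Bt; auto. apply predext; split; auto.
Qed.
End Zext.

Lemma extension D B0 m0 S : BA D -> BA B0 -> (forall a, B0 a -> D a) -> is_kmeasure B0 m0 -> D S ->
  exists m, is_kmeasure D m /\ agree B0 m m0 /\ m S = inner B0 m0 S.
Proof. intros hD hB0 h0D hm0 hS.
destruct (@onestep B0 m0 S hB0 hm0) as [be [ie [Se [ke [ae eS]]]]].
destruct (@Zext D (extB B0 S) (extm B0 m0 S)) as [m [km am]]; auto.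
apply extB_sub; auto.
exists m. split; auto. unfold agree in *. split. intros a ha. rewrite am; auto. rewrite am; auto.
Qed.
End Gen.
Section Syn.
Variables (L : Language) (M : Structure L).
Local Notation X := (nat -> carrier M).

Lemma teval_coinc (t : term M) : forall v w : X, (forall j, tfv t j -> v j = w j) -> teval v t = teval w t.
Proof. induction t as [n|c|f a IH]; intros v w h; simpl in *; auto.
f_equal. apply functional_extensionality; intro k. apply IH. intros j hj. apply h. exists k; auto. Qed.

Lemma sat_coinc (q : formula M) : forall v w : X, (forall j, ffv q j -> v j = w j) -> (sat v q <-> sat w q).
Proof. induction q as [|t1 t2|r a|q IH|q1 IH1 q2 IH2|i q IH]; intros v w h; simpl in *.
- tauto.
- rewrite (teval_coinc (v:=v) (w:=w)); [| intros; apply h; auto].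
  rewrite (teval_coinc (t:=t2) (v:=v) (w:=w)); [| intros; apply h; auto]. tauto.
- assert ((fun k => teval v (a k)) = (fun k => teval w (a k))) as ->; [|tauto].
  apply functional_extensionality; intro k. apply teval_coinc. intros j hj; apply h; exists k; auto.
- rewrite (IH v w h); tauto.
- rewrite (IH1 v w); [|intros; apply h; auto]. rewrite (IH2 v w); [|intros; apply h; auto]. tauto.
- split; intros [b hb]; exists b.
  + apply (IH (upd v i b)); auto. intros j hj. unfold upd. destruct (j == i) eqn:E; auto.
    apply h. split; auto. intro e; subst. rewrite eqxx in E; discriminate.
  + apply (IH (upd v i b) (upd w i b)); auto. intros j hj. unfold upd. destruct (j == i) eqn:E; auto.
    apply h. split; auto. intro e; subst. rewrite eqxx in E; discriminate.
Qed.

Fixpoint ExL (l : seq nat) (q : formula M) : formula M :=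
  match l with [::] => q | i :: l' => Ex i (ExL l' q) end.

Lemma ExL_fv l q j : ffv (ExL l q) j -> ffv q j /\ j \notin l.
Proof. induction l as [|i l IH]; simpl; auto. intros [h1 h2]. destruct (IH h2) as [h3 h4]. split; auto.
rewrite in_cons negb_or h4 andbT. apply/eqP; auto. Qed.
Lemma ExL_par l q c : fpar (ExL l q) c -> fpar q c.
Proof. induction l as [|i l IH]; simpl; auto. Qed.
Lemma ExL_intro l q (v : X) : sat v q -> sat v (ExL l q).
Proof. induction l as [|i l IH]; simpl; auto. intro h. exists (v i).
assert (upd v i (v i) = v) as ->; auto. apply functional_extensionality; intro j; unfold upd.
destruct (j == i) eqn:E; auto. move/eqP: E => ->; auto. Qed.
Lemma ExL_elim l q : forall (v : X), sat v (ExL l q) -> exists w, (forall j, j \notin l -> w j = v j) /\ sat w q.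
Proof. induction l as [|i l IH]; simpl; intros v h. exists v; auto.
destruct h as [b hb]. destruct (IH _ hb) as [w [h1 h2]]. exists w; split; auto.
intros j hj. rewrite in_cons negb_or in hj. move/andP: hj => [h3 h4]. rewrite h1; auto.
unfold upd. rewrite (negbTE h3); auto. Qed.

Lemma BA_Lform (C : M -> Prop) xs : BA (Lform C xs).
Proof. split; [|split].
- exists (Neg (Fals M)). simpl. split. tauto. split. tauto. apply setext; simpl; tauto.
- intros S [q [h1 [h2 ->]]]. exists (Neg q). simpl; auto.
- intros S1 S2 [q1 [h1 [h2 ->]]] [q2 [h3 [h4 ->]]]. exists (And q1 q2). simpl. split.
  intros i [e|e]; auto. split; auto. intros c [e|e]; auto.
Qed.

Lemma Lform_mono (C C' : M -> Prop) xs ys S : (forall c, C c -> C' c) -> (forall i, i \in xs -> i \in ys) ->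
  Lform C xs S -> Lform C' ys S.
Proof. intros hc hi [q [h1 [h2 ->]]]. exists q; auto. Qed.

Lemma proj_lemma (A : M -> Prop) (x y : seq nat) (Hxy : forall i, i \in x -> i \notin y) (S T : X -> Prop) :
  Lform A (x ++ y) S -> Lform (@setTM L M) y T -> (forall v, S v -> T v) ->
  exists S', Lform A y S' /\ (forall v, S v -> S' v) /\ (forall v, S' v -> T v).
Proof. intros [q [h1 [h2 ->]]] [qT [h3 [h4 ->]]] inc.
exists (fun v => sat v (ExL x q)). split; [|split].
- exists (ExL x q). split; [|split; auto].
  intros i hi. destruct (ExL_fv hi) as [h5 h6]. move: (h1 i h5). rewrite mem_cat. move/orP => [h7|h7]; auto.
  rewrite h7 in h6; discriminate.
  intros c hc; apply h2; apply ExL_par with x; auto.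
- intros v; apply ExL_intro.
- intros v hv. destruct (ExL_elim hv) as [w [hw1 hw2]]. apply inc in hw2.
  apply (sat_coinc (v:=w) (w:=v)); auto. intros j hj. apply hw1. apply/negP; intro hx.
  move: (Hxy j hx). rewrite (h3 j hj). discriminate.
Qed.
End Syn.
Unset Implicit Arguments.
Set Strict Implicit.
Lemma km_restrict (L : Language) (U : Structure L) (B0 D : ((nat -> U) -> Prop) -> Prop) m :
  (forall a, B0 a -> D a) -> is_kmeasure D m -> is_kmeasure B0 m.
Proof. intros h [h1 [h2 h3]]. split; [|split]; auto. Qed.

Theorem proposition4p7 (L : Language) (U : Structure L) (K : Type)
  (HU : monster U K) (A : U -> Prop) (HA : @small L U K A)
  (x y : seq nat) (Hxy : forall i, i \in x -> i \notin y)
  (mu nu : ((nat -> U) -> Prop) -> R)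
  (Hmu : is_kmeasure (Lform (@setTM L U) x) mu)
  (Hnu : is_kmeasure (Lform (@setTM L U) y) nu) :
  smooth A x mu -> E_ge A x y mu nu -> smooth A y nu.
Proof.
intros Hsm [lam [klam [aglam Hom]]] nu' knu' agnu'.
assert (incx : forall i, i \in x -> i \in x ++ y) by (intros i hi; rewrite mem_cat hi; auto).
assert (incy : forall i, i \in y -> i \in x ++ y) by (intros i hi; rewrite mem_cat hi orbT; auto).
assert (AT : forall c, A c -> setTM c) by (intros; exact I).
assert (idi : forall (xs : seq nat) i, i \in xs -> i \in xs) by auto.
assert (kmuA : is_kmeasure (Lform A x) mu).
{ apply km_restrict with (Lform (@setTM L U) x); auto. intros a; apply Lform_mono; auto. }
assert (smc : forall psi, Lform (@setTM L U) x psi -> mu psi = inner (Lform A x) mu psi).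
{ intros psi hpsi.
  destruct (@extension L U (Lform (@setTM L U) x) (Lform A x) mu psi) as [mu' [k' [a' e']]];
    auto using BA_Lform.
  intros a; apply Lform_mono; auto.
  rewrite <- e'. symmetry. apply (Hsm mu' k' a' psi hpsi). }
assert (key : forall T, Lform (@setTM L U) y T -> nu T <= nu' T).
{ intros T hT.
  destruct (@extension L U (Lform (@setTM L U) (x ++ y)) (Lform A (x ++ y)) lam T) as [om [kom [aom eom]]];
    auto using BA_Lform.
  intros a; apply Lform_mono; auto.
  apply (Lform_mono (fun c h => h) incy hT).
  assert (ge : forall psi, Lform (@setTM L U) x psi -> mu psi <= om psi).
  { intros psi hpsi. rewrite (smc psi hpsi). apply I2; auto using BA_Lform.
    intros a ha ia. rewrite <- (aglam a ha). rewrite <- (aom a (Lform_mono (fun c h => h) incx ha)).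
    apply km_mono with (Lform (@setTM L U) (x ++ y)); auto using BA_Lform.
    apply (Lform_mono AT incx ha). apply (Lform_mono (fun c h => h) incx hpsi). }
  assert (agx : agree (Lform (@setTM L U) x) om mu).
  { intros psi hpsi. assert (hn : Lform (@setTM L U) x (fun v => ~ psi v)) by (apply BA_N; auto using BA_Lform).
    assert (h1 := ge psi hpsi). assert (h2 := ge _ hn).
    assert (h3 := km_N (BA_Lform _ _) Hmu hpsi).
    assert (h4 := km_N (BA_Lform _ _) kom (Lform_mono (fun c h => h) incx hpsi)). lra. }
  assert (agy := Hom om kom aom agx).
  rewrite <- (agy T hT). rewrite eom. apply I2; auto using BA_Lform.
  intros phi hphi iphi. destruct (proj_lemma Hxy hphi hT iphi) as [phi' [h1 [h2 h3]]].
  apply Rle_trans with (lam phi').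
  apply km_mono with (Lform A (x ++ y)); auto using BA_Lform. apply (Lform_mono (fun c h => h) incy h1).
  rewrite <- (aom phi' (Lform_mono (fun c h => h) incy h1)).
  rewrite (agy phi' (Lform_mono AT (fun i h => h) h1)).
  rewrite <- (agnu' phi' h1).
  apply km_mono with (Lform (@setTM L U) y); auto using BA_Lform. apply (Lform_mono AT (fun i h => h) h1). }
intros chi hchi.
assert (hn : Lform (@setTM L U) y (fun v => ~ chi v)) by (apply BA_N; auto using BA_Lform).
assert (h1 := key chi hchi). assert (h2 := key _ hn).
assert (h3 := km_N (BA_Lform _ _) Hnu hchi).
assert (h4 := km_N (BA_Lform _ _) knu' hchi). lra.
Qed.
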